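(* Let $(\mathcal G_t)\subseteq(\mathcal F_t)$ be a filtration, $(\rho^n)_{n\ge1}\subset\tilde{\mathcal A}^\circ(\mathcal G_t)$ and $\rho\in\tilde{\mathcal A}^\circ(\mathcal G_t)$ with $$\mathbb P\big(\{\omega:\lim_{n\to\infty}\rho^n_t(\omega)=\rho_t(\omega)\text{ for all }t\in C_\rho(\omega)\cup\{T\}\}\big)=1.$$ Let $\theta$ be an $\mathcal F$-measurable random variable with values in $(0,T]$ and $X$ an $\mathcal F$-measurable random variable with values in $[0,\infty)$ and $\mathbb E[X]<\infty$. Then $$\limsup_{n\to\infty}\mathbb E\Big[\int_{[0,T]}1_{\{t\ge\theta\}}X\,d\rho^n_t\Big]\le\mathbb E\Big[\int_{[0,T]}1_{\{t\ge\theta\}}X\,d\rho_t\Big].$$ If moreover $\mathbb P(\{\omega:\theta(\omega)\in C_\rho(\omega)\text{ or }X(\omega)=0\})=1$, then the limit exists and equality holds.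
   Context: $(\Omega,\mathcal F,\mathbb P)$ complete probability space with filtration $(\mathcal F_t)_{t\in[0,T]}$, $T\in(0,\infty]$. $\tilde{\mathcal A}^\circ(\mathcal G_t)$ is the set of $(\mathcal G_t)$-adapted processes $\rho$ with, for all $\omega$, $t\mapsto\rho_t(\omega)$ càdlàg non-decreasing, $\rho_{0-}=0$ and $\rho_T\le1$. For a càdlàg process $X$, $C_X(\omega)=\{t\in[0,T]:X_{t-}(\omega)=X_t(\omega)\}$. Integrals are pathwise Lebesgue–Stieltjes. *)

(* Defs.v *)
From HB Require Import structures.
From mathcomp Require Import all_boot all_order all_algebra.
From mathcomp Require Import all_classical all_reals all_analysis measurable_realfun.
Set Implicit Arguments. Unset Strict Implicit. Unset Printing Implicit Defensive.
Import Order.TTheory GRing.Theory Num.Theory.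
Import numFieldNormedType.Exports.
Local Open Scope classical_set_scope.
Local Open Scope ring_scope.

Section Defs.
Context (R : realType).

(* Time is indexed by extended reals; the time set is [0,T] with T in (0,+oo]. *)

(* Turn a proof of cumulativity into a Lebesgue-Stieltjes measure
   (fallback: zero measure when F is not cumulative -- never used under
   our hypotheses). *)
Definition ls_measure (F : R -> R) :
    {measure set (g_sigma_algebraType R.-ocitv.-measurable) -> \bar R} :=
  match pselect (nondecreasing F /\ right_continuous F) with
  | left H => lebesgue_stieltjes_measure
                (HB.pack F (isCumulative.Build R _ R F (proj1 H) (proj2 H)))
  | right _ => mzero
  end.

(* A path t |-> f t on [0,T], extended to R by 0 on (-oo,0) and by f T after T
   (the convention f_{0-} = 0). *)
Definition ext_path (T : \bar R) (f : \bar R -> R) (x : R) : R :=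
  if x < 0 then 0 else if (x%:E <= T)%E then f x%:E else f T.

Definition leftlim (f : \bar R -> R) (t : \bar R) : R :=
  match t with
  | r%:E => if r <= 0 then 0 else lim (f x%:E @[x --> r^'-])
  | +oo%E => lim (f x%:E @[x --> +oo])
  | -oo%E => 0
  end.

Definition contset (T : \bar R) (f : \bar R -> R) : set (\bar R) :=
  [set t | (0 <= t)%E /\ (t <= T)%E /\ leftlim f t = f t].

(* Pathwise Lebesgue-Stieltjes integral \int_{[0,T]} g(t) df_t of a
   nonnegative integrand: the finite part of [0,T] is integrated against the
   LS measure of the extended path (which carries the atom f_0 - f_{0-} = f_0
   at 0); if T = +oo the atom f_oo - f_{oo-} at +oo is added. *)
Definition LSint (T : \bar R) (f : \bar R -> R) (g : \bar R -> \bar R) : \bar R :=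
  ((\int[ls_measure (ext_path T f)]_(x in [set x : R | (0 <= x)%R /\ (x%:E <= T)%E]) g x%:E)
   + (if T == +oo%E then g +oo%E * (f +oo%E - leftlim f +oo%E)%:E else 0))%E.

Definition filtration d (Omega : measurableType d) (T : \bar R)
    (F : \bar R -> set (set Omega)) : Prop :=
  (forall t, (0 <= t)%E -> (t <= T)%E ->
     sigma_algebra setT (F t) /\ F t `<=` measurable) /\
  (forall s t, (0 <= s)%E -> (s <= t)%E -> (t <= T)%E -> F s `<=` F t).

Definition Atilde0 d (Omega : measurableType d) (T : \bar R)
    (G : \bar R -> set (set Omega)) (rho : Omega -> \bar R -> R) : Prop :=
  (forall t, (0 <= t)%E -> (t <= T)%E ->
     forall B : set R, measurable B -> (fun w => rho w t) @^-1` B \in G t) /\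
  forall w,
    (* rho_{0-} = 0 <= rho_0 (non-decreasing from the value 0 at 0-) *)
    0 <= rho w 0%E /\
    (forall s t, (0 <= s)%E -> (s <= t)%E -> (t <= T)%E -> rho w s <= rho w t) /\
    (forall r : R, 0 <= r -> (r%:E < T)%E ->
       rho w x%:E @[x --> r^'+] --> rho w r%:E) /\
    (forall r : R, 0 < r -> (r%:E <= T)%E -> cvg (rho w x%:E @[x --> r^'-])) /\
    (T = +oo%E -> cvg (rho w x%:E @[x --> +oo])) /\
    rho w T <= 1.

End Defs.

(* Main.v *)
Require Import Defs.
From HB Require Import structures.
From mathcomp Require Import all_boot all_order all_algebra.
From mathcomp Require Import all_classical all_reals all_analysis measurable_realfun.
From mathcomp Require Import lra.
Import Order.TTheory GRing.Theory Num.Theory.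
Import numFieldNormedType.Exports.
Local Open Scope classical_set_scope.
Local Open Scope ring_scope.

Set Implicit Arguments. Unset Strict Implicit. Unset Printing Implicit Defensive.

Section LS.
Context {R : realType}.

Lemma ls_itvoc (F : cumulative R R) (a b : R) : a <= b ->
  lebesgue_stieltjes_measure F `]a, b] = (F b - F a)%:E.
Proof.
move=> ab; rewrite /lebesgue_stieltjes_measure /measure_extension/=.
rewrite measurable_mu_extE/= ?wlength_itv_bnd//; exact: is_ocitv.
Qed.

Lemma nd_left_cvg (F : cumulative R R) (r : R) : cvg (F x @[x --> r^'-]).
Proof.
apply: nondecreasing_at_left_is_cvgr; apply: nearW => x.
  by move=> u v _ _ uv; apply: (@cumulative_is_nondecreasing _ _ _ F).
exists (F r) => z [y]; rewrite /= in_itv /= => /andP[_ /ltW yr] <-.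
exact: (@cumulative_is_nondecreasing _ _ _ F).
Qed.


Lemma cvg_left_seq (f : R -> R) (r l : R) : f x @[x --> r^'-] --> l ->
  f (r - n.+1%:R^-1) @[n --> \oo] --> l.
Proof.
move/cvg_at_leftP; apply; split => [n|].
  by rewrite ltrBlDr ltrDl invr_gt0.
rewrite -[X in _ --> X]subr0; apply: cvgB; first exact: cvg_cst.
exact: (@cvg_harmonic R).
Qed.

Lemma ls_itvcc (F : cumulative R R) (r b : R) : r <= b ->
  lebesgue_stieltjes_measure F `[r, b] = (F b - lim (F x @[x --> r^'-]))%:E.
Proof.
move=> rb; set L := lim _.
have FL : F x @[x --> r^'-] --> L by exact: nd_left_cvg.
have eqI : `[r, b]%classic = \bigcap_n `]r - n.+1%:R^-1, b]%classic.
  apply/seteqP; split => x.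
    rewrite /= in_itv /= => /andP[rx xb] n _ /=; rewrite in_itv /= xb andbT.
    by rewrite (lt_le_trans _ rx)// ltrBlDr ltrDl invr_gt0.
  move=> /= h; rewrite in_itv /=.
  have := h 0%N I; rewrite /= in_itv /= => /andP[_ ->]; rewrite andbT.
  rewrite leNgt; apply/negP => xr.
  have rx0 : 0 < r - x by rewrite subr_gt0.
  have := h (Num.truncn ((r - x)^-1)) I; rewrite /= in_itv /= => /andP[+ _].
  rewrite ltrBlDr -ltrBlDl ltNge => /negP; apply.
  rewrite -[X in _ <= X]invrK lef_pV2 ?posrE ?invr_gt0 ?ltr0n//.
  exact/ltW/truncnS_gt.
have mu_n : (lebesgue_stieltjes_measure F \o (fun n => `]r - n.+1%:R^-1, b]%classic))
   @ \oo --> lebesgue_stieltjes_measure F (\bigcap_n `]r - n.+1%:R^-1, b]%classic).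
  apply: nonincreasing_cvg_mu.
  - rewrite /= ls_itvoc ?ltry// (le_trans _ rb)// lerBlDr lerDl invr_ge0 //.
  - by move=> n; exact: measurable_itv.
  - by apply: bigcap_measurable => [|n _]; [exists 0%N|exact: measurable_itv].
  - move=> n m nm; apply/subsetPset => x /=; rewrite !in_itv /= => /andP[h ->].
    rewrite andbT; apply: (le_lt_trans _ h); rewrite lerB // lef_pV2 ?posrE ?ler_nat//.
rewrite eqI; suff lim2 : (lebesgue_stieltjes_measure F \o (fun n => `]r - n.+1%:R^-1, b]%classic))
   @ \oo --> (F b - L)%:E by exact: (cvg_unique _ mu_n lim2).
apply: cvg_EFin.
  by apply: nearW => n; rewrite /= ls_itvoc// (le_trans _ rb)// lerBlDr lerDl invr_ge0.
rewrite /comp /=.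
have -> : (fun n => fine (lebesgue_stieltjes_measure F `]r - n.+1%:R^-1, b]%classic)) =
  (fun n => F b - F (r - n.+1%:R^-1)).
  apply/funext => n; rewrite ls_itvoc// (le_trans _ rb)// lerBlDr lerDl invr_ge0 //.
apply: cvgB; first exact: cvg_cst.
exact: cvg_left_seq.
Qed.


Lemma ls_itvcy (F : cumulative R R) (r l : R) : F x @[x --> +oo] --> l ->
  lebesgue_stieltjes_measure F `[r, +oo[ = (l - lim (F x @[x --> r^'-]))%:E.
Proof.
move=> Fl; set L := lim _.
have eqU : `[r, +oo[%classic = \bigcup_n `[r, r + n%:R]%classic.
  apply/seteqP; split => x.
    rewrite /= in_itv /= andbT => rx.
    exists (Num.truncn (x - r)).+1 => //=; rewrite in_itv /= rx /=.
    by rewrite -lerBlDl ltW// truncnS_gt.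
  by move=> [n _] /=; rewrite !in_itv /= andbT => /andP[].
have mu_n : (lebesgue_stieltjes_measure F \o (fun n => `[r, r + n%:R]%classic))
   @ \oo --> lebesgue_stieltjes_measure F (\bigcup_n `[r, r + n%:R]%classic).
  apply: nondecreasing_cvg_mu.
  - by move=> n; exact: measurable_itv.
  - by apply: bigcup_measurable => n _; exact: measurable_itv.
  - move=> n m nm; apply/subsetPset => x /=; rewrite !in_itv /= => /andP[-> h].
    by rewrite (le_trans h)// lerD2l ler_nat.
rewrite eqU; suff lim2 : (lebesgue_stieltjes_measure F \o (fun n => `[r, r + n%:R]%classic))
   @ \oo --> (l - L)%:E by exact: (cvg_unique _ mu_n lim2).
apply: cvg_EFin.
  by apply: nearW => n; rewrite /= ls_itvcc// lerDl.
rewrite /comp /=.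
have -> : (fun n => fine (lebesgue_stieltjes_measure F `[r, r + n%:R]%classic)) =
  (fun n => F (r + n%:R) - L).
  by apply/funext => n; rewrite ls_itvcc// lerDl.
apply: cvgB; last exact: cvg_cst.
apply: (cvg_comp _ _ _ Fl).
apply/cvgryPge => M; near=> n.
rewrite -lerBlDl; near: n; exact: nbhs_infty_ger.
Unshelve. all: by end_near. Qed.


Definition pathOK (T : \bar R) (f : \bar R -> R) : Prop :=
    0 <= f 0%E /\
    (forall s t, (0 <= s)%E -> (s <= t)%E -> (t <= T)%E -> f s <= f t) /\
    (forall r : R, 0 <= r -> (r%:E < T)%E ->
       f x%:E @[x --> r^'+] --> f r%:E) /\
    (forall r : R, 0 < r -> (r%:E <= T)%E -> cvg (f x%:E @[x --> r^'-])) /\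
    (T = +oo%E -> cvg (f x%:E @[x --> +oo])) /\
    f T <= 1.

Lemma ext_path_nd T f : (0 < T)%E -> pathOK T f -> nondecreasing (ext_path T f).
Proof.
move=> T0 [f0 [nd _]] x y xy; rewrite /ext_path.
have fge0 t : (0 <= t)%E -> (t <= T)%E -> 0 <= f t.
  by move=> t0 tT; apply: (le_trans f0); apply: nd.
have fT : 0 <= f T by apply: fge0 => //; exact: ltW.
case: ifPn => x0.
  case: ifPn => // y0; case: ifPn => // yT.
  by apply: fge0; rewrite // lee_fin leNgt.
have y0 : ~~ (y < 0) by rewrite -leNgt (le_trans _ xy)// leNgt.
rewrite (negbTE y0); rewrite -leNgt in x0; rewrite -leNgt in y0.
case: ifPn => xT; case: ifPn => yT.
- by apply: nd; rewrite ?lee_fin.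
- by apply: nd; rewrite ?lee_fin.
- by exfalso; move: xT; rewrite (le_trans _ yT)// lee_fin.
- by [].
Qed.

Lemma ext_path_rc T f : (0 < T)%E -> pathOK T f -> right_continuous (ext_path T f).
Proof.
move=> T0 [f0 [nd [rc _]]] x; rewrite /ext_path.
have [x0|x0] := ltP x 0.
  apply: cvg_near_cst; near=> y.
  by rewrite ifT //; near: y; exact: nbhs_right_lt.
have [xT|Tx] := ltP x%:E T.
  rewrite ifT ?ltW//.
  have hT : \forall y \near x^'+, (y%:E <= T)%E.
    move: xT; case: T {T0 nd rc} => [t||] //= xt.
      near=> y; rewrite lee_fin; near: y; apply: nbhs_right_le; by rewrite -lte_fin.
    by apply: nearW => y; rewrite leey.
  apply: (@cvg_trans _ (f y%:E @[y --> x^'+])); last exact: rc.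
  apply: near_eq_cvg; near=> y.
  rewrite ifF; last by apply/negbTE; rewrite -leNgt (le_trans x0)// ltW//; near: y; exact: nbhs_right_gt.
  by rewrite ifT //; near: y.
apply: cvg_near_cst; near=> y.
have xy : x < y by near: y; exact: nbhs_right_gt.
rewrite ifF; last by apply/negbTE; rewrite -leNgt (le_trans x0)// ltW.
rewrite ifF; last by apply/negbTE; rewrite -ltNge (le_lt_trans Tx)// lte_fin.
case: ifPn => // xT'.
by have -> : x%:E = T by apply/eqP; rewrite eq_le xT'.
Unshelve. all: by end_near. Qed.

Lemma LS_helper T f (th : \bar R) c (G : cumulative R R) : (0 < T)%E -> pathOK T f ->
  (0 < th)%E -> (th <= T)%E -> 0 <= c -> (forall x, G x = ext_path T f x) ->
  ((\int[lebesgue_stieltjes_measure G]_(x in [set x : R | (0 <= x)%R /\ (x%:E <= T)%E])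
      (fun t => if (th <= t)%E then c%:E else 0%E) x%:E)
   + (if T == +oo%E then (fun t => if (th <= t)%E then c%:E else 0%E) +oo%E *
        (f +oo%E - leftlim f +oo%E)%:E else 0))%E = (c * (f T - leftlim f th))%:E.
Proof.
move=> T0 pf th0 thT c0 GE.
have [f0 [nd [rc [lc [ic f1]]]]] := pf.
have leftG r : 0 < r -> (r%:E <= T)%E -> lim (G x @[x --> r^'-]) = leftlim f r%:E.
  move=> r0 rT; rewrite /leftlim ifF; last by apply/negbTE; rewrite -ltNge.
  apply: cvg_lim => //; apply: cvg_trans (lc r r0 rT).
  apply: near_eq_cvg; near=> x.
  rewrite GE /ext_path ifF; last first.
    by apply/negbTE; rewrite -leNgt ltW//; near: x; exact: nbhs_left_gt.
  rewrite ifT // (le_trans _ rT)// lee_fin; near: x; exact: nbhs_left_le.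
case: th th0 thT => [r||] //= r0 rT; last first.
  have TE : T = +oo%E by apply/eqP; rewrite eq_le leey rT.
  subst T; rewrite integral0_eq //.
  by rewrite eqxx add0e EFinM.
rewrite lte_fin in r0.
under eq_integral => x _.
  have -> : (if (r%:E <= x%:E)%E then c%:E else 0%E) = (c * \1_(`[r, +oo[%classic) x)%:E.
    rewrite indicE (_ : (x \in `[r, +oo[%classic) = (r <= x)); last by apply/idP/idP; rewrite ?inE /= in_itv /= andbT. 
    by rewrite lee_fin; case: ifP => _; rewrite ?mulr1 ?mulr0.
  over.
case: T T0 pf nd rc lc ic f1 GE leftG rT => [t||] //= T0 pf nd rc lc ic f1 GE leftG rT.
  have -> : [set x : R | (0 <= x)%R /\ (x%:E <= t%:E)%E] = `[0, t]%classic.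
    by apply/seteqP; split => x /=; rewrite in_itv /= lee_fin; [move=> [-> ->] | move/andP].

  rewrite integralZl_indic //; last first.
    by move=> c0'; exfalso; move: c0; rewrite leNgt c0'.
  rewrite integral_indic //.
  have -> : `[r, +oo[%classic `&` `[0, t]%classic = `[r, t]%classic.
    apply/seteqP; split => x /=; rewrite !in_itv /= ?andbT.
      by move=> [-> /andP[_ ->]].
    by move=> /andP[rx ->]; split => //; rewrite andbT (le_trans _ rx)// ltW.
  set m := (X in (c%:E * X + _)%E).
  have -> : m = (G t - lim (G x @[x --> r^'-]))%:E by apply: ls_itvcc; rewrite -lee_fin.
  by rewrite leftG// adde0 GE /ext_path ifF ?lexx -?EFinM //; apply/negbTE; rewrite -leNgt ltW// -lte_fin.
have -> : [set x : R | (0 <= x)%R /\ (x%:E <= +oo)%E] = `[0, +oo[%classic.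
  by apply/seteqP; split => x /=; rewrite in_itv /= ?leey ?andbT => -[] //.
rewrite integralZl_indic //; last first.
  by move=> c0'; exfalso; move: c0; rewrite leNgt c0'.
rewrite integral_indic //.
have -> : `[r, +oo[%classic `&` `[0, +oo[%classic = `[r, +oo[%classic.
  apply/seteqP; split => x /=; rewrite !in_itv /= ?andbT; first by move=> [].
  by move=> rx; split => //; rewrite (le_trans _ rx)// ltW.
have /cvg_ex[l fl] := ic erefl.
set m := (X in (c%:E * X + _)%E).
have -> : m = (l - lim (G x @[x --> r^'-]))%:E.
  apply: ls_itvcy; apply: cvg_trans fl; apply: near_eq_cvg; near=> x.
  rewrite GE /ext_path ifF ?leey //; apply/negbTE; rewrite -leNgt; near: x.
  exact: nbhs_pinfty_ge.
rewrite leftG ?leey// (cvg_lim _ fl)//.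
by rewrite -!EFinM -EFinD -mulrDr; congr (_ * _)%:E; rewrite addrC addrA subrK.
Unshelve. all: by end_near. Qed.

Lemma LSint_ind T f (th : \bar R) c : (0 < T)%E -> pathOK T f ->
  (0 < th)%E -> (th <= T)%E -> 0 <= c ->
  LSint T f (fun t => if (th <= t)%E then c%:E else 0%E) = (c * (f T - leftlim f th))%:E.
Proof.
move=> T0 pf th0 thT c0; rewrite /LSint /ls_measure; case: pselect => [H|H]; last first.
  by exfalso; apply: H; split; [exact: ext_path_nd | exact: ext_path_rc].
by apply: LS_helper.
Qed.

Lemma near_dist_lt {U} (F : set_system U) {FF : Filter F} (g : U -> R) (L e : R) :
  0 < e -> g @ F --> L -> \forall x \near F, L - e < g x /\ g x < L + e.
Proof.
move=> e0 /cvgrPdist_lt /(_ e e0); apply: filterS => x.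
rewrite ltr_distlC => /andP[h1 h2]; split => //.
Qed.
Arguments near_dist_lt {U F FF g L e}.

Lemma ll_props T f th : (0 < T)%E -> pathOK T f -> (0 < th)%E -> (th <= T)%E ->
  [/\ (forall s, 0 <= s -> (s%:E < th)%E -> f s%:E <= leftlim f th),
      leftlim f th <= f th &
      (forall e, 0 < e -> exists s, [/\ 0 <= s, (s%:E < th)%E & leftlim f th - e < f s%:E])].
Proof.
move=> T0 [f0 [nd [rc [lc [ic f1]]]]].
case: th => [r||] //= r0 rT; last first.
  have TE : T = +oo%E by apply/eqP; rewrite eq_le leey rT.
  subst T; have hc := ic erefl.
  split.
  - move=> s s0 _; apply: limr_ge => //; near=> x; apply: nd; rewrite ?leey ?lee_fin//;
    try by near: x; exact: nbhs_pinfty_ge.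
  - apply: limr_le => //; near=> x; apply: nd; rewrite ?leey ?lee_fin//;
    try by near: x; exact: nbhs_pinfty_ge.
  - move=> e e0; pose proof (near_dist_lt e0 hc) as H.
    have : \forall x \near +oo, 0 <= x /\ (lim (f x%:E @[x --> +oo]) - e < f x%:E).
      near=> x; split; last by have [] := near H x.
      near: x; exact: nbhs_pinfty_ge.
    by case/filter_ex => x [x0 hx]; exists x; split => //; rewrite ltry.
rewrite lte_fin in r0.
rewrite ifF; last by apply/negbTE; rewrite -ltNge.
have hc := lc r r0 rT.
split.
- move=> s s0; rewrite lte_fin => sr; apply: limr_ge => //; near=> x; apply: nd; rewrite ?lee_fin//;
    try by [apply: ltW; near: x; exact: nbhs_left_gt
           |apply: (le_trans _ rT); rewrite lee_fin; near: x; exact: nbhs_left_le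
           |near: x; exact: nbhs_left_le].
- apply: limr_le => //; near=> x; apply: nd; rewrite ?lee_fin//;
    try by [apply: ltW; near: x; exact: nbhs_left_gt
           |near: x; exact: nbhs_left_le].
- move=> e e0; pose proof (near_dist_lt e0 hc) as H.
  have : \forall x \near r^'-, [/\ 0 <= x, x < r & lim (f x%:E @[x --> r^'-]) - e < f x%:E].
    near=> x; split; last by have [] := near H x.
    + by apply: ltW; near: x; exact: nbhs_left_gt.
    + by near: x; exact: nbhs_left_lt.
  by case/filter_ex => x [x0 xr hx]; exists x; split => //; rewrite lte_fin.
Unshelve. all: by end_near. Qed.

Lemma exists_not_in_countable (a b : R) (S : set R) : a < b -> countable S ->
  exists x, a < x < b /\ ~ S x.
Proof.
move=> ab cS; apply: contrapT => /forallNP H.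
have sub : `]a, b[%classic `<=` S.
  move=> x; rewrite /= in_itv /= => xab.
  by have /not_andP[//|/contrapT] := H x.
have : countable `]a, b[%classic by apply: sub_countable cS; exact: subset_card_le.
move/(@countable_lebesgue_measure0 R); rewrite lebesgue_measure_itv /= lte_fin ab.
by move/eqP; rewrite -EFinB eqe subr_eq0 => /eqP ba; move: ab; rewrite ba ltxx.
Qed.

Lemma cont_pt T f a b : pathOK T f -> 0 <= a -> a < b -> (b%:E <= T)%E ->
  exists c, a < c < b /\ contset T f c%:E.
Proof.
move=> [f0 [nd [rc [lc [ic f1]]]]] a0 ab bT.
have ndF : {in `[a, b] &, nondecreasing_fun (fun x => f x%:E)}.
  move=> x y; rewrite !in_itv /= => /andP[ax _] /andP[_ yb] xy.
  by apply: nd; rewrite ?lee_fin// ?(le_trans a0)// (le_trans _ bT)// lee_fin.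
have [c [/andP[ac cb] nS]] := exists_not_in_countable ab (discontinuity_countable ndF).
exists c; split; first by rewrite ac cb.
have c0 : 0 < c by apply: le_lt_trans ac.
have cT : (c%:E < T)%E by apply: lt_le_trans bT; rewrite lte_fin.
split; first by rewrite lee_fin ltW.
split; first exact: ltW.
rewrite /leftlim ifF; last by apply/negbTE; rewrite -ltNge.
have hr := rc c (ltW c0) cT.
have hl := lc c c0 (ltW cT).
rewrite -(cvg_lim _ hr) //.
apply: contrapT => neq; apply: nS; split; first by rewrite /= in_itv /= ac cb.
split => //; first by apply/cvg_ex; exists (f c%:E).
by apply/eqP.
Qed.

Lemma conv_ll_lower T (fn : nat -> \bar R -> R) f th : (0 < T)%E ->
  (forall n, pathOK T (fn n)) -> pathOK T f ->
  (forall t, contset T f t \/ t = T -> (fun n => fn n t) @ \oo --> f t) ->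
  (0 < th)%E -> (th <= T)%E -> forall e, 0 < e ->
  \forall n \near \oo, leftlim f th - e < leftlim (fn n) th.
Proof.
move=> T0 pfn pf hconv th0 thT e e0.
have [_ _ h3] := ll_props T0 pf th0 thT.
have e20 : 0 < e / 2 by rewrite divr_gt0.
have [s [s0 sth hs]] := h3 _ e20.
have [b [sb bth bT]] : exists b, [/\ s < b, (b%:E <= th)%E & (b%:E <= T)%E].
  move: sth thT; case: th {th0 h3 hs} => [r||] //= sr rT.
    by exists r; split => //; rewrite -lte_fin.
  by exists (s + 1); split; rewrite ?ltrDl ?leey// (le_trans _ rT)// leey.
have [c [/andP[sc cb] cC]] := cont_pt pf s0 sb bT.
have hc := hconv c%:E (or_introl cC).
pose proof (near_dist_lt e20 hc) as H.
have [f0 [nd _]] := pf.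
have fsc : f s%:E <= f c%:E.
  apply: nd; [by rewrite lee_fin|by rewrite lee_fin ltW|].
  by apply: le_trans bT; rewrite lee_fin ltW.
have cth : (c%:E < th)%E by apply: lt_le_trans bth; rewrite lte_fin.
have c0 : 0 <= c by rewrite (le_trans s0)// ltW.
near=> n.
have [h1 _ _] := ll_props T0 (pfn n) th0 thT.
have := h1 c c0 cth.
have [H1 _] : f c%:E - e / 2 < fn n c%:E /\ fn n c%:E < f c%:E + e / 2 by near: n.
move: hs fsc H1; lra.
Unshelve. all: by end_near. Qed.

Lemma conv_ll_upper T (fn : nat -> \bar R -> R) f th : (0 < T)%E ->
  (forall n, pathOK T (fn n)) -> pathOK T f ->
  (forall t, contset T f t \/ t = T -> (fun n => fn n t) @ \oo --> f t) ->
  (0 < th)%E -> (th <= T)%E -> contset T f th -> forall e, 0 < e ->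
  \forall n \near \oo, leftlim (fn n) th < leftlim f th + e.
Proof.
move=> T0 pfn pf hconv th0 thT cth e e0.
have hc := hconv th (or_introl cth).
pose proof (near_dist_lt e0 hc) as H.
have [_ [_ ->]] := cth.
near=> n.
have [_ h2 _] := ll_props T0 (pfn n) th0 thT.
have [_ H2] : f th - e < fn n th /\ fn n th < f th + e by near: n.
move: h2 H2; lra.
Unshelve. all: by end_near. Qed.

Lemma le_esups_pt (u v : (\bar R)^nat) : (forall n, (u n <= v n)%E) ->
  forall n, (esups u n <= esups v n)%E.
Proof.
move=> uv n; apply: ub_ereal_sup => _ [k /= kn <-].
by apply: le_trans (uv k) _; apply: ereal_sup_ubound; exists k.
Qed.

Lemma le_limn_esup' (u v : (\bar R)^nat) : (forall n, (u n <= v n)%E) ->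
  (limn_esup u <= limn_esup v)%E.
Proof.
move=> uv; rewrite !limn_esup_lim; apply: lee_lim; try exact: is_cvg_esups.
by apply: nearW; exact: le_esups_pt.
Qed.

Lemma esup_le_near (u : (\bar R)^nat) (a : R) :
  (forall e, 0 < e -> \forall n \near \oo, (u n <= (a + e)%:E)%E) ->
  (limn_esup u <= a%:E)%E.
Proof.
move=> H; apply/lee_addgt0Pr => e e0; rewrite limn_esup_lim.
apply: lime_le; first exact: is_cvg_esups.
case: (H e e0) => N _ hN.
near=> n.
have Nn : (N <= n)%N by near: n; exists N.
apply: ub_ereal_sup => _ [k /= kn <-].
by rewrite -EFinD; apply: hN => /=; apply: leq_trans kn.
Unshelve. all: by end_near. Qed.

Lemma ll_ge0 T f th : (0 < T)%E -> pathOK T f -> (0 < th)%E -> (th <= T)%E ->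
  0 <= leftlim f th.
Proof.
move=> T0 pf th0 thT; have [h1 _ _] := ll_props T0 pf th0 thT.
by apply: le_trans (h1 0 (lexx 0) th0); case: pf.
Qed.

Lemma ll_le_T T f th : (0 < T)%E -> pathOK T f -> (0 < th)%E -> (th <= T)%E ->
  leftlim f th <= f T.
Proof.
move=> T0 pf th0 thT; have [_ h2 _] := ll_props T0 pf th0 thT.
apply: le_trans h2 _; have [_ [nd _]] := pf; apply: nd => //; exact: ltW.
Qed.

Lemma ll_sup T f th : (0 < T)%E -> pathOK T f -> (0 < th)%E -> (th <= T)%E ->
  (leftlim f th)%:E = ereal_sup (range (fun q : rat =>
     (if (0 <= @ratr R q) && ((@ratr R q)%:E < th)%E then f (@ratr R q)%:E else 0)%:E)).
Proof.
move=> T0 pf th0 thT; have [h1 h2 h3] := ll_props T0 pf th0 thT.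
have L0 := ll_ge0 T0 pf th0 thT.
apply/eqP; rewrite eq_le; apply/andP; split; last first.
  apply: ub_ereal_sup => _ [q _ <-]; rewrite lee_fin.
  by case: ifP => // /andP[q0 qth]; exact: h1.
apply/lee_addgt0Pr => e e0.
have [s [s0 sth hs]] := h3 e e0.
have [q [sq qth]] : exists q : rat, s < @ratr R q /\ ((@ratr R q)%:E < th)%E.
  move: sth thT; case: th {th0 h1 h2 h3 hs L0} => [r||] //= sr rT.
    have /(@rat_in_itvoo R)[q] : s < r by rewrite -lte_fin.
    by rewrite in_itv /= => /andP[sq qr]; exists q; split => //; rewrite lte_fin.
  have /(@rat_in_itvoo R)[q] : s < s + 1 by rewrite ltrDl.
  by rewrite in_itv /= => /andP[sq _]; exists q; split => //; rewrite ltry.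
have q0 : 0 <= @ratr R q by rewrite (le_trans s0)// ltW.
have fsq : f s%:E <= f (@ratr R q)%:E.
  have [_ [nd _]] := pf; apply: nd; [by rewrite lee_fin|by rewrite lee_fin ltW|].
  exact: (le_trans (ltW qth)).
apply: (@le_trans _ _ ((f (@ratr R q)%:E)%:E + e%:E)%E).
  by rewrite -EFinD lee_fin; move: hs fsq; lra.
rewrite leeD2r //; apply: ereal_sup_ubound; exists q => //.
by rewrite q0 qth.
Qed.

Lemma meas_ll d (Omega : measurableType d) T (rho : Omega -> \bar R -> R)
    (theta : Omega -> \bar R) : (0 < T)%E -> (forall w, pathOK T (rho w)) ->
  (forall t, (0 <= t)%E -> (t <= T)%E -> measurable_fun setT (fun w => rho w t)) ->
  measurable_fun setT theta -> (forall w, (0 < theta w)%E /\ (theta w <= T)%E) ->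
  measurable_fun setT (fun w => leftlim (rho w) (theta w)).
Proof.
move=> T0 pf mrho mth hth.
pose g (q : rat) (w : Omega) : R :=
  if (0 <= @ratr R q) && ((@ratr R q)%:E < theta w)%E then rho w (@ratr R q)%:E else 0.
have mg q : measurable_fun setT (fun w => (g q w)%:E).
  apply/measurable_EFinP; rewrite /g.
  have [q0|q0] := boolP (0 <= @ratr R q); last first.
    exact: measurable_cst.
  have [qT|qT] := boolP ((@ratr R q)%:E < T)%E.
    apply: measurable_fun_ifT.
    - by apply: measurable_fun_lte => //; exact: measurable_cst.
    - by apply: mrho; rewrite ?lee_fin// ltW.
    - exact: measurable_cst.
  under eq_fun => w.
    rewrite ifF; last first.
      rewrite /=; apply/negbTE; rewrite -leNgt; apply: le_trans (hth w).2 _.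
      by rewrite leNgt.
    over.
  exact: measurable_cst.
apply/measurable_EFinP.
have -> : (EFin \o (fun w => leftlim (rho w) (theta w))) =
    (fun w => ereal_sup (range (fun q => (g q w)%:E))).
  by apply/funext => w /=; rewrite (ll_sup T0 (pf w) (hth w).1 (hth w).2).
move=> _; apply: (measurability _ (ErealGenOInfty.measurableE R)) => //.
move=> _ [_ [x ->] <-].
have -> : (fun w => ereal_sup (range (fun q => (g q w)%:E))) @^-1` `]x%:E, +oo[%classic =
    \bigcup_q (fun w => (g q w)%:E) @^-1` `]x%:E, +oo[%classic.
  rewrite predeqE => t; split => /=.
    rewrite /= in_itv /= andbT => /ereal_sup_gt[_ [/= k _ <-]] afnt.
    by exists k => //=; rewrite in_itv /= afnt.
  move=> -[k _] /=; rewrite in_itv /= andbT => /lt_le_trans afkt.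
  by rewrite in_itv andbT/=; apply/afkt/ereal_sup_ubound; exists k.
rewrite setTI; apply: bigcupT_measurable_rat => q.
by rewrite -[X in measurable X]setTI; apply: mg => //; exact: emeasurable_itv.
Qed.

Lemma small_prod (x D e : R) : 0 <= x -> 0 < e -> D <= e / (x + 1) -> x * D <= e.
Proof.
move=> x0 e0 hD; apply: le_trans (ler_wpM2l x0 hD) _.
have x1 : 0 < x + 1 by rewrite ltr_wpDl.
rewrite mulrA ler_pdivrMr //; nra.
Qed.

Lemma part1_path T (fn : nat -> \bar R -> R) f th (x : R) : (0 < T)%E ->
  (forall n, pathOK T (fn n)) -> pathOK T f ->
  (forall t, contset T f t \/ t = T -> (fun n => fn n t) @ \oo --> f t) ->
  (0 < th)%E -> (th <= T)%E -> 0 <= x ->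
  (limn_esup (fun n => (x * (fn n T - leftlim (fn n) th))%:E) <=
     (x * (f T - leftlim f th))%:E)%E.
Proof.
move=> T0 pfn pf hconv th0 thT x0; apply: esup_le_near => e e0.
have x1 : 0 < x + 1 by rewrite ltr_wpDl.
set E := e / (x + 1).
have E0 : 0 < E by rewrite divr_gt0.
have d0 : 0 < E / 2 by rewrite divr_gt0.
have h1 := conv_ll_lower T0 pfn pf hconv th0 thT d0.
pose proof (near_dist_lt d0 (hconv T (or_intror erefl))) as hT.
near=> n; rewrite lee_fin.
have l1 : leftlim f th - E / 2 < leftlim (fn n) th by near: n.
have [_ t2] : f T - E / 2 < fn n T /\ fn n T < f T + E / 2 by near: n.
rewrite -lerBlDl -mulrBr; apply: small_prod => //.
rewrite -/E; lra.
Unshelve. all: by end_near. Qed.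

Lemma part2_path T (fn : nat -> \bar R -> R) f th (x : R) : (0 < T)%E ->
  (forall n, pathOK T (fn n)) -> pathOK T f ->
  (forall t, contset T f t \/ t = T -> (fun n => fn n t) @ \oo --> f t) ->
  (0 < th)%E -> (th <= T)%E -> 0 <= x -> contset T f th \/ x = 0 ->
  (fun n => x * (fn n T - leftlim (fn n) th)) @ \oo --> x * (f T - leftlim f th).
Proof.
move=> T0 pfn pf hconv th0 thT x0 [cth|->]; last first.
  by under eq_fun do rewrite mul0r; rewrite mul0r; exact: cvg_cst.
apply/cvgrPdist_lt => e e0.
have x1 : 0 < x + 1 by rewrite ltr_wpDl.
have e20 : 0 < e / 2 by rewrite divr_gt0.
set E := e / 2 / (x + 1).
have E0 : 0 < E by rewrite divr_gt0.
have d0 : 0 < E / 2 by rewrite divr_gt0.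
have h1 := conv_ll_lower T0 pfn pf hconv th0 thT d0.
have h2 := conv_ll_upper T0 pfn pf hconv th0 thT cth d0.
pose proof (near_dist_lt d0 (hconv T (or_intror erefl))) as hT.
near=> n.
have l1 : leftlim f th - E / 2 < leftlim (fn n) th by near: n.
have l2 : leftlim (fn n) th < leftlim f th + E / 2 by near: n.
have [t1 t2] : f T - E / 2 < fn n T /\ fn n T < f T + E / 2 by near: n.
rewrite -mulrBr normrM (ger0_norm x0).
apply: (@le_lt_trans _ _ (e / 2)); last by rewrite ltr_pdivrMr // ltr_pMr // ltr1n.
apply: small_prod => //; rewrite -/E ler_norml; apply/andP; split; lra.
Unshelve. all: by end_near. Qed.

End LS.

Theorem mainTheorem18 (R : realType) (d : measure_display)
  (Omega : measurableType d) (P : probability Omega R)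
  (T : \bar R) (F G : \bar R -> set (set Omega))
  (rhon : nat -> Omega -> \bar R -> R) (rho : Omega -> \bar R -> R)
  (theta : Omega -> \bar R) (X : Omega -> R) :
  measure_is_complete P ->
  (0 < T)%E ->
  filtration T F -> filtration T G ->
  (forall t, (0 <= t)%E -> (t <= T)%E -> G t `<=` F t) ->
  (forall n, Atilde0 T G (rhon n)) ->
  Atilde0 T G rho ->
  {ae P, forall w, forall t, contset T (rho w) t \/ t = T ->
      (fun n => rhon n w t) @ \oo --> rho w t} ->
  measurable_fun setT theta ->
  (forall w, (0 < theta w)%E /\ (theta w <= T)%E) ->
  measurable_fun setT X ->
  (forall w, 0 <= X w) ->
  P.-integrable setT (EFin \o X) ->
  let I (r : Omega -> \bar R -> R) :=
    (\int[P]_w LSint T (r w) (fun t => if (theta w <= t)%E then (X w)%:E else 0%E))%E in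
  (limn_esup (fun n => I (rhon n)) <= I rho)%E /\
  ({ae P, forall w, contset T (rho w) (theta w) \/ X w = 0} ->
     (fun n => I (rhon n)) @ \oo --> I rho).
Proof.
move=> _ T0 _ HG _ Hn H Hconv mth hth mX X0 iX I.
have pfn n w : pathOK T (rhon n w) := (Hn n).2 w.
have pf w : pathOK T (rho w) := H.2 w.
have madapt (r : Omega -> \bar R -> R) : Atilde0 T G r ->
    forall t, (0 <= t)%E -> (t <= T)%E -> measurable_fun setT (fun w => r w t).
  move=> [Ha _] t t0 tT _ Y mY; rewrite setTI.
  have := Ha t t0 tT Y mY; rewrite inE; exact: (HG.1 t t0 tT).2.
have IE (r : Omega -> \bar R -> R) : (forall w, pathOK T (r w)) ->
    I r = (\int[P]_w (X w * (r w T - leftlim (r w) (theta w)))%:E)%E.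
  move=> pr; rewrite /I; apply: eq_integral => w _.
  exact: LSint_ind (pr w) (hth w).1 (hth w).2 (X0 w).
have ma (r : Omega -> \bar R -> R) : Atilde0 T G r ->
    measurable_fun setT (fun w => X w * (r w T - leftlim (r w) (theta w))).
  move=> Hr; apply: measurable_funM => //; apply: measurable_funB.
  - by apply: madapt => //; exact: ltW.
  - by apply: (meas_ll (T:=T)) => //; [move=> w; exact: (Hr.2 w) | exact: madapt Hr].
have abnd (r : Omega -> \bar R -> R) : (forall w, pathOK T (r w)) ->
    forall w, 0 <= X w * (r w T - leftlim (r w) (theta w)) <= X w.
  move=> pr w.
  have l0 := ll_ge0 T0 (pr w) (hth w).1 (hth w).2.
  have l1 := ll_le_T T0 (pr w) (hth w).1 (hth w).2.
  have [_ [_ [_ [_ [_ r1]]]]] := pr w.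
  have x0 := X0 w; apply/andP; split; nra.
pose a n w := X w * (rhon n w T - leftlim (rhon n w) (theta w)).
pose a0 w := X w * (rho w T - leftlim (rho w) (theta w)).
have IEn : (fun n => I (rhon n)) = (fun n => \int[P]_w (a n w)%:E)%E.
  by apply/funext => n; rewrite IE.
rewrite IEn IE //.
have man n : measurable_fun setT (fun w => (a n w)%:E).
  by apply/measurable_EFinP; exact: ma.
have ma0 : measurable_fun setT (fun w => (a0 w)%:E).
  by apply/measurable_EFinP; exact: ma.
split.
- pose Gs n w := esups (fun k => (a k w)%:E) n.
  have mG n : measurable_fun setT (Gs n).
    exact: (measurable_fun_esups (f := fun k w => (a k w)%:E)).
  have Gb n w : (0 <= Gs n w)%E /\ (Gs n w <= (X w)%:E)%E.
    split.
      apply: le_trans (ereal_sup_ubound _); last by exists n => /=.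
      by rewrite lee_fin; have /andP[] := abnd _ (pfn n) w.
    apply: ub_ereal_sup => _ [k _ <-]; rewrite lee_fin.
    by have /andP[] := abnd _ (pfn k) w.
  have Gcvg w : Gs ^~ w @ \oo --> limn_esup (fun k => (a k w)%:E).
    by rewrite limn_esup_lim; exact: is_cvg_esups.
  have DC : (fun n => \int[P]_w Gs n w)%E @ \oo -->
      (\int[P]_w limn_esup (fun k => (a k w)%:E))%E.
    apply: (@dominated_cvg _ _ _ P setT measurableT Gs _ (EFin \o X)) => //.
    - by move=> n w _; rewrite gee0_abs; have [] := Gb n w.
  apply: (le_trans (le_limn_esup' (v := fun n => \int[P]_w Gs n w)%E _)).
    move=> n; apply: ge0_le_integral => //.
    - by move=> w _; rewrite lee_fin; have /andP[] := abnd _ (pfn n) w.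
    - move=> w _; apply: ereal_sup_ubound; by exists n => /=.
  rewrite ((cvg_limn_einf_sup DC).2).
  apply: ae_ge0_le_integral => //.
  - move=> w _; rewrite limn_esup_lim; apply: lime_ge; first exact: is_cvg_esups.
    by apply: nearW => n; have [] := Gb n w.
  - exact: measurable_fun_limn_esup.
  - by move=> w _; rewrite lee_fin; have /andP[] := abnd _ pf w.
  - apply: filterS Hconv => w hw _.
    exact: part1_path T0 (fun n => pfn n w) (pf w) hw (hth w).1 (hth w).2 (X0 w).
- move=> hae.
  have hff : {ae P, forall x, setT x -> (fun n => (a n x)%:E) @ \oo --> (a0 x)%:E}.
    apply: filterS2 Hconv hae => w hw h2 _.
    apply: cvg_EFin; first exact: nearW.
    exact: part2_path T0 (fun n => pfn n w) (pf w) hw (hth w).1 (hth w).2 (X0 w) h2.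
  have hfg : {ae P, forall x n, setT x -> (`|(a n x)%:E| <= (EFin \o X) x)%E}.
    apply: aeW => w n _; rewrite /= ger0_norm ?lee_fin; have /andP[] := abnd _ (pfn n) w => //.
  have [_ _ DCv] := dominated_convergence measurableT man ma0 hff iX hfg.
  exact: DCv.
Qed.
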